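(* Let $\Omega=\mathbb{T}^3$, $\delta>0$, $q\ge1$, $t>0$, and let $\mathbf{u}:[0,t]\times\Omega\to\mathbb{R}^3$ be sufficiently regular and periodic in $x$. Set $B=|\mathbb{D}(\mathbf{u})|^2+\delta^2$. Then $$\mathbb{J}:=-\int_0^t\int_\Omega\mathbf{u}_t\cdot\operatorname{div}\Big(B^{\frac{q-2}{2}}\mathbb{D}(\mathbf{u})\Big)_t\,dx\,ds\ \ge\ 0 .$$
   Context: $\mathbb{D}(\mathbf{u})=\frac12(\nabla\mathbf{u}+\nabla^t\mathbf{u})$ is the symmetric gradient, $|\mathbb{D}(\mathbf{u})|^2=\sum_{i,j}\mathbb{D}_{ij}(\mathbf{u})^2$, and the subscript $t$ denotes the time derivative. *)

(* Defs.v *)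
From HB Require Import structures.
From mathcomp Require Import all_boot all_order all_algebra.
From mathcomp Require Import all_classical all_reals all_analysis.
Set Implicit Arguments. Unset Strict Implicit. Unset Printing Implicit Defensive.
Import Order.TTheory GRing.Theory Num.Theory.
Import numFieldNormedType.Exports.
Local Open Scope classical_set_scope.
Local Open Scope ring_scope.

Section Defs.
Variable R : realType.

(* Space-time points are row vectors in R^4: coordinate 0 is time s,
   coordinates 1,2,3 are the space variables x_1,x_2,x_3. *)
Definition pt4 (s x1 x2 x3 : R) : 'rV[R]_4 :=
  \row_(k < 4) [:: s; x1; x2; x3]`_k.

Definition e4 (k : 'I_4) : 'rV[R]_4 := delta_mx 0 k.

Definition sp (i : 'I_3) : 'I_4 := lift ord0 i.

Definition dt (f : 'rV[R]_4 -> R) : 'rV[R]_4 -> R := 'D_(e4 ord0) f.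
Definition dx (j : 'I_3) (f : 'rV[R]_4 -> R) : 'rV[R]_4 -> R := 'D_(e4 (sp j)) f.

Fixpoint Dseq (vs : seq 'rV[R]_4) (f : 'rV[R]_4 -> R) : 'rV[R]_4 -> R :=
  if vs is v :: vs' then 'D_v (Dseq vs' f) else f.

Definition smooth (f : 'rV[R]_4 -> R) : Prop :=
  forall vs : seq 'rV[R]_4,
    continuous (Dseq vs f) /\ (forall (v x : 'rV[R]_4), derivable (Dseq vs f) x v).

(* periodic of period 1 in each space variable, i.e. a function on R x T^3 *)
Definition periodic_x (f : 'rV[R]_4 -> R) : Prop :=
  forall (j : 'I_3) (x : 'rV[R]_4), f (x + e4 (sp j)) = f x.

Definition symgrad (u : 'I_3 -> 'rV[R]_4 -> R) (i j : 'I_3) : 'rV[R]_4 -> R :=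
  fun x => (dx j (u i) x + dx i (u j) x) / 2.

Definition symgrad_norm2 (u : 'I_3 -> 'rV[R]_4 -> R) : 'rV[R]_4 -> R :=
  fun x => \sum_(i < 3) \sum_(j < 3) (symgrad u i j x) ^+ 2.

Definition Bfun (delta : R) (u : 'I_3 -> 'rV[R]_4 -> R) : 'rV[R]_4 -> R :=
  fun x => symgrad_norm2 u x + delta ^+ 2.

Definition stress (delta q : R) (u : 'I_3 -> 'rV[R]_4 -> R) (i j : 'I_3)
  : 'rV[R]_4 -> R :=
  fun x => (Bfun delta u x) `^ ((q - 2) / 2) * symgrad u i j x.

Definition div_stress (delta q : R) (u : 'I_3 -> 'rV[R]_4 -> R) (i : 'I_3)
  : 'rV[R]_4 -> R :=
  fun x => \sum_(j < 3) dx j (stress delta q u i j) x.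

Definition Jintegrand (delta q : R) (u : 'I_3 -> 'rV[R]_4 -> R)
  : 'rV[R]_4 -> R :=
  fun x => - \sum_(i < 3) dt (u i) x * dt (div_stress delta q u i) x.

(* J = int_0^t int_{T^3} integrand dx ds, with T^3 = [0,1]^3 (iterated
   Lebesgue integrals) *)
Definition Jval (delta q t : R) (u : 'I_3 -> 'rV[R]_4 -> R) : R :=
  \int[lebesgue_measure]_(s in `[0, t])
   \int[lebesgue_measure]_(x1 in `[0, 1])
    \int[lebesgue_measure]_(x2 in `[0, 1])
     \int[lebesgue_measure]_(x3 in `[0, 1])
       Jintegrand delta q u (pt4 s x1 x2 x3).

End Defs.

(* Main.v *)
Require Import Defs.
From HB Require Import structures.
From mathcomp Require Import all_boot all_order all_algebra.
From mathcomp Require Import all_classical all_reals all_analysis.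
From mathcomp Require Import ring lra.
Set Implicit Arguments. Unset Strict Implicit. Unset Printing Implicit Defensive.
Import Order.TTheory GRing.Theory Num.Theory.
Import numFieldNormedType.Exports.
Local Open Scope classical_set_scope.
Local Open Scope ring_scope.

Section S1.
Variable R : realType.
Local Notation V := 'rV[R]_4.

Lemma line_eqfun (g : V -> R) (v x : V) :
  (fun h : R => h^-1 *: ((g \o shift x) (h *: v) - g x)) =
  (fun h : R => h^-1 *: (((fun t : R => g (t *: v + x)) \o shift 0) (h *: 1)
     - (fun t : R => g (t *: v + x)) 0)).
Proof. by apply/funext => h /=; rewrite addr0 scale0r add0r [_%:A]mulr1. Qed.

Lemma DlineE (g : V -> R) (v x : V) :
  'D_v g x = 'D_1 (fun t : R => g (t *: v + x)) 0.
Proof. by rewrite /derive line_eqfun. Qed.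

Lemma is_derive_line (g : V -> R) (v p : V) (y : R) :
  derivable g (y *: v + p) v ->
  is_derive y 1 (fun t : R => g (t *: v + p)) ('D_v g (y *: v + p)).
Proof.
have E : (fun h : R => h^-1 *: (((fun t : R => g (t *: v + p)) \o shift y) (h *: 1)
     - (fun t : R => g (t *: v + p)) y)) =
  (fun h : R => h^-1 *: ((g \o shift (y *: v + p)) (h *: v) - g (y *: v + p))).
  by apply/funext => h /=; rewrite [_%:A]mulr1 scalerDl addrA.
move=> dg; split; first by rewrite /derivable E.
by rewrite /derive E.
Qed.

Lemma D_comp (phi dphi : R -> R) (g : V -> R) x v :
  derivable g x v -> is_derive (g x) 1 phi (dphi (g x)) ->
  is_derive x v (fun y => phi (g y)) (dphi (g x) * 'D_v g x).
Proof.
move=> dg [dphi1 Dphi].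
set l := fun t : R => g (t *: v + x).
have l0 : l 0 = g x by rewrite /l scale0r add0r.
have dl : derivable l 0 1 by exact/(derivable1P g x v).1.
have dphil : derivable phi (l 0) 1 by rewrite l0.
have dc : derivable (phi \o l) 0 1.
  apply/derivable1_diffP; apply: differentiable_comp; exact/derivable1_diffP.
split.
  by rewrite /derivable line_eqfun.
rewrite (DlineE (fun y => phi (g y))).
have -> : (fun t : R => phi (g (t *: v + x))) = phi \o l by [].
rewrite -derive1E derive1_comp // l0 derive1E Dphi derive1E -DlineE //.
Qed.

Fixpoint Ck (n : nat) (f : V -> R) : Prop :=
  match n with
  | 0 => continuous f
  | m.+1 => continuous f /\
      forall k : 'I_4, (forall x, derivable f x (e4 R k)) /\ Ck m ('D_(e4 R k) f)
  end.

Lemma Ck_cont n f : Ck n f -> continuous f.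
Proof. by case: n => //= n []. Qed.

Lemma Ck_der n f k x : Ck n.+1 f -> derivable f x (e4 R k).
Proof. by move=> [_ /(_ k) [H _]]. Qed.

Lemma Ck_D n f k : Ck n.+1 f -> Ck n ('D_(e4 R k) f).
Proof. by move=> [_ /(_ k) [_ H]]. Qed.

Lemma Ck_le m n f : (m <= n)%N -> Ck n f -> Ck m f.
Proof.
elim: n m f => [|n IH] [|m] f //=.
- by move=> _ [].
- move=> mn [c H]; split => // k; have [d D] := H k; split => //.
  exact: IH.
Qed.

End S1.


Section S2.
Variable R : realType.
Local Notation V := 'rV[R]_4.
Local Notation Ck := (@Ck R).

Lemma Ck_cst n (c : R) : Ck n (fun _ => c).
Proof.
elim: n c => [|n IH] c /=; first exact: cst_continuous.
split; first exact: cst_continuous.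
move=> k; split; first by move=> x; exact: derivable_cst.
have -> : 'D_(e4 R k) (fun _ : V => c) = (fun _ => 0).
  by apply/funext => x; exact: derive_cst.
exact: IH.
Qed.

Lemma Ck_add n (f g : V -> R) : Ck n f -> Ck n g -> Ck n (fun x => f x + g x).
Proof.
elim: n f g => [|n IH] f g /=.
  by move=> cf cg x; exact: (continuousD (cf x) (cg x)).
move=> [cf Hf] [cg Hg]; split; first by move=> x; exact: (continuousD (cf x) (cg x)).
move=> k; have [df Cf] := Hf k; have [dg Cg] := Hg k; split.
  by move=> x; exact: derivableD.
have -> : 'D_(e4 R k) (fun x => f x + g x) =
   (fun x => 'D_(e4 R k) f x + 'D_(e4 R k) g x).
  by apply/funext => x; exact: deriveD.
exact: IH.
Qed.

Lemma Ck_mul n (f g : V -> R) : Ck n f -> Ck n g -> Ck n (fun x => f x * g x).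
Proof.
elim: n f g => [|n IH] f g /=.
  by move=> cf cg x; exact: (continuousM (cf x) (cg x)).
move=> [cf Hf] [cg Hg]; split; first by move=> x; exact: (continuousM (cf x) (cg x)).
move=> k; have [df Cf] := Hf k; have [dg Cg] := Hg k; split.
  by move=> x; exact: derivableM.
have -> : 'D_(e4 R k) (fun x => f x * g x) =
   (fun x => f x * 'D_(e4 R k) g x + g x * 'D_(e4 R k) f x).
  by apply/funext => x; exact: deriveM.
have Cf' : Ck n f by apply: (Ck_le (leqnSn n)); split.
have Cg' : Ck n g by apply: (Ck_le (leqnSn n)); split.
by apply: Ck_add; apply: IH.
Qed.

Lemma Ck_scale n (c : R) (f : V -> R) : Ck n f -> Ck n (fun x => c * f x).
Proof. by move=> Cf; apply: Ck_mul => //; exact: Ck_cst. Qed.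

Lemma Ck_opp n (f : V -> R) : Ck n f -> Ck n (fun x => - f x).
Proof.
move=> Cf; have := Ck_scale (-1) Cf.
by have -> : (fun x => -1 * f x) = (fun x => - f x) by apply/funext => x; rewrite mulN1r.
Qed.

Lemma Ck_sub n (f g : V -> R) : Ck n f -> Ck n g -> Ck n (fun x => f x - g x).
Proof. by move=> Cf Cg; apply: Ck_add => //; exact: Ck_opp. Qed.

Lemma Ck_sum n m (F : 'I_m -> V -> R) :
  (forall i, Ck n (F i)) -> Ck n (fun x => \sum_(i < m) F i x).
Proof.
elim: m F => [|m IH] F HF.
  have -> : (fun x => \sum_(i < 0) F i x) = (fun _ => 0).
    by apply/funext => x; rewrite big_ord0.
  exact: Ck_cst.
have -> : (fun x => \sum_(i < m.+1) F i x) =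
   (fun x => \sum_(i < m) F (widen_ord (leqnSn m) i) x + F ord_max x).
  by apply/funext => x; rewrite big_ord_recr.
by apply: Ck_add => //; apply: IH.
Qed.

Lemma Ck_exp n (g : V -> R) : Ck n g -> Ck n (fun x => expR (g x)).
Proof.
elim: n g => [|n IH] g /=.
  by move=> cg x; apply: continuous_comp; [exact: cg|exact: continuous_expR].
move=> [cg Hg]; split.
  by move=> x; apply: continuous_comp; [exact: cg|exact: continuous_expR].
have Cg' : Ck n g by apply: (Ck_le (leqnSn n)); split.
move=> k; have [dg Cg] := Hg k.
have D x : is_derive x (e4 R k) (fun y => expR (g y)) (expR (g x) * 'D_(e4 R k) g x).
  exact: (D_comp (dphi := expR)).
split; first by move=> x; exact: (D x).(ex_derive).
have -> : 'D_(e4 R k) (fun x => expR (g x)) = (fun x => expR (g x) * 'D_(e4 R k) g x).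
  by apply/funext => x; exact: (D x).(derive_val).
by apply: Ck_mul => //; exact: IH.
Qed.

Lemma Ck_inv n (g : V -> R) : (forall x, 0 < g x) -> Ck n g -> Ck n (fun x => (g x)^-1).
Proof.
move=> gpos; have gn0 x : g x != 0 by rewrite gt_eqF.
elim: n g gpos gn0 => [|n IH] g gpos gn0 /=.
  by move=> cg x; exact: (continuousV (gn0 x) (cg x)).
move=> [cg Hg]; split.
  by move=> x; exact: (continuousV (gn0 x) (cg x)).
have Cg' : Ck n g by apply: (Ck_le (leqnSn n)); split.
move=> k; have [dg Cg] := Hg k.
split; first by move=> x; exact: derivableV.
have -> : 'D_(e4 R k) (fun x => (g x)^-1) =
   (fun x => - ((g x)^-1 * (g x)^-1) * 'D_(e4 R k) g x).
  by apply/funext => x; rewrite deriveV // expr2 invfM.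
apply: Ck_mul => //; apply: Ck_opp; apply: Ck_mul; exact: IH.
Qed.

Lemma Ck_ln n (g : V -> R) : (forall x, 0 < g x) -> Ck n g -> Ck n (fun x => ln (g x)).
Proof.
move=> gpos.
elim: n g gpos => [|n IH] g gpos /=.
  by move=> cg x; apply: continuous_comp; [exact: cg|exact: continuous_ln].
move=> [cg Hg]; split.
  by move=> x; apply: continuous_comp; [exact: cg|exact: continuous_ln].
have Cg' : Ck n g by apply: (Ck_le (leqnSn n)); split.
move=> k; have [dg Cg] := Hg k.
have D x : is_derive x (e4 R k) (fun y => ln (g y)) ((g x)^-1 * 'D_(e4 R k) g x).
  apply: (D_comp (dphi := fun y => y^-1)) => //; exact: is_derive1_ln.
split; first by move=> x; exact: (D x).(ex_derive).
have -> : 'D_(e4 R k) (fun x => ln (g x)) = (fun x => (g x)^-1 * 'D_(e4 R k) g x).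
  by apply/funext => x; exact: (D x).(derive_val).
by apply: Ck_mul => //; exact: Ck_inv.
Qed.

Lemma Dseq_D (vs : seq V) (v : V) (f : V -> R) :
  Dseq vs ('D_v f) = Dseq (rcons vs v) f.
Proof. by elim: vs => [|w vs IH] //=; rewrite IH. Qed.

Lemma smooth_D (f : V -> R) v : smooth f -> smooth ('D_v f).
Proof. by move=> sf vs; rewrite Dseq_D; exact: sf. Qed.

Lemma smooth_Ck n (f : V -> R) : smooth f -> Ck n f.
Proof.
elim: n f => [|n IH] f sf /=; first exact: (sf [::]).1.
split; first exact: (sf [::]).1.
move=> k; split; first by move=> x; exact: (sf [::]).2.
by apply: IH; exact: smooth_D.
Qed.

End S2.


Section S3.
Variable R : realType.
Local Notation V := 'rV[R]_4.
Local Notation Ck := (@Ck R).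

Lemma swap4 (a b c d : R) : a - b - (c - d) = a - c - (b - d).
Proof. ring. Qed.

Lemma mvt2 (f : V -> R) (va vb x : V) (h : R) : 0 < h ->
  (forall y, derivable f y va) -> (forall y, derivable ('D_va f) y vb) ->
  exists c d, [/\ 0 < c < h, 0 < d < h &
    f (h *: va + (h *: vb + x)) - f (h *: va + x) - (f (h *: vb + x) - f x)
    = h * h * 'D_vb ('D_va f) (d *: vb + (c *: va + x))].
Proof.
move=> h0 df dg.
pose psi := fun s : R => f (s *: va + (h *: vb + x)) - f (s *: va + x).
have Dpsi (s : R) : is_derive s 1 psi
   ('D_va f (s *: va + (h *: vb + x)) - 'D_va f (s *: va + x)).
  have D1 := is_derive_line (df (s *: va + (h *: vb + x))).
  have D2 := is_derive_line (df (s *: va + x)).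
  exact: (is_deriveB D1 D2).
have cpsi : {within `[0, h], continuous psi}.
  apply: derivable_within_continuous => s _; exact: (Dpsi s).(ex_derive).
have [c /[!in_itv] /= /andP[c0 ch] Ec] := MVT h0 (fun s _ => Dpsi s) cpsi.
pose chi := fun y : R => 'D_va f (y *: vb + (c *: va + x)).
have Dchi (y : R) : is_derive y 1 chi ('D_vb ('D_va f) (y *: vb + (c *: va + x))).
  exact: (is_derive_line (dg (y *: vb + (c *: va + x)))).
have cchi : {within `[0, h], continuous chi}.
  apply: derivable_within_continuous => s _; exact: (Dchi s).(ex_derive).
have [d /[!in_itv] /= /andP[d0 dh] Ed] := MVT h0 (fun s _ => Dchi s) cchi.
exists c, d; split; rewrite ?c0 ?ch ?d0 ?dh //.
have E1 : f (h *: va + (h *: vb + x)) - f (h *: va + x) - (f (h *: vb + x) - f x)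
   = psi h - psi 0 by rewrite /psi !scale0r !add0r.
rewrite E1 Ec subr0.
have -> : 'D_va f (c *: va + (h *: vb + x)) - 'D_va f (c *: va + x) = chi h - chi 0.
  by rewrite /chi scale0r add0r addrCA.
rewrite Ed subr0; ring.
Qed.

Lemma clairaut (f : V -> R) (a b : 'I_4) : Ck 2 f ->
  'D_(e4 R b) ('D_(e4 R a) f) = 'D_(e4 R a) ('D_(e4 R b) f).
Proof.
move=> Cf; apply/funext => x.
set va := e4 R a; set vb := e4 R b.
have dfa y : derivable f y va by exact: Ck_der Cf.
have dfb y : derivable f y vb by exact: Ck_der Cf.
have dga y : derivable ('D_va f) y vb by apply: Ck_der; exact: Ck_D Cf.
have dgb y : derivable ('D_vb f) y va by apply: Ck_der; exact: Ck_D Cf.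
have c1 : continuous ('D_vb ('D_va f)) by apply: Ck_cont; apply: Ck_D; exact: Ck_D Cf.
have c2 : continuous ('D_va ('D_vb f)) by apply: Ck_cont; apply: Ck_D; exact: Ck_D Cf.
set G1 := 'D_vb ('D_va f) in c1 *; set G2 := 'D_va ('D_vb f) in c2 *.
apply/eqP; rewrite -subr_eq0 -normr_le0; apply/ler_addgt0Pr => e e0.
rewrite add0r.
have e20 : 0 < e / 2 by rewrite divr_gt0.
have /cvgrPdist_lt /(_ _ e20) /nbhs_ballP [r1 r10 B1] := c1 x.
have /cvgrPdist_lt /(_ _ e20) /nbhs_ballP [r2 r20 B2] := c2 x.
set K := `|va| + `|vb| + 1.
have K0 : 0 < K by rewrite /K ltr_wpDl // addr_ge0.
set h := Num.min r1 r2 / (2 * K).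
have rm0 : 0 < Num.min r1 r2 by rewrite lt_min r10 r20.
have h0 : 0 < h by rewrite /h divr_gt0 // mulr_gt0.
have hK : h * K < Num.min r1 r2.
  have -> : h * K = Num.min r1 r2 / 2.
    rewrite /h; field; by rewrite gt_eqF.
  lra.
have close (c d : R) (u w : V) (r : R) : 0 < c < h -> 0 < d < h ->
    `|u| + `|w| <= K -> Num.min r1 r2 <= r -> ball x r (d *: w + (c *: u + x)).
  move=> /andP[c0 ch] /andP[d0 dh] uwK mr.
  rewrite -ball_normE /=.
  have -> : x - (d *: w + (c *: u + x)) = - (d *: w + c *: u).
    by rewrite addrA [_ + x]addrC opprD addrA subrr add0r.
  rewrite normrN (le_lt_trans (ler_normD _ _)) // !normrZ !gtr0_norm //.
  apply: (@le_lt_trans _ _ (h * K)); last exact: (lt_le_trans hK).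
  apply: (@le_trans _ _ (h * `|w| + h * `|u|)).
    by apply: lerD; rewrite ler_wpM2r // ltW.
  rewrite -mulrDr ler_wpM2l ?(ltW h0) //.
  by rewrite addrC; apply: le_trans uwK _; rewrite /K lexx.
have [c [d [ch dh E]]] := mvt2 x h0 dfa dga.
have [c' [d' [ch' dh' E']]] := mvt2 x h0 dfb dgb.
have EE : G1 (d *: vb + (c *: va + x)) = G2 (d' *: va + (c' *: vb + x)).
  have hh0 : h * h != 0 by rewrite mulf_neq0 // gt_eqF.
  have L : f (h *: va + (h *: vb + x)) - f (h *: va + x) - (f (h *: vb + x) - f x)
    = f (h *: vb + (h *: va + x)) - f (h *: vb + x) - (f (h *: va + x) - f x).
    by rewrite [h *: vb + (h *: va + x)]addrCA swap4.
  apply: (mulfI hh0); exact: (etrans (esym E) (etrans L E')).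
have uK1 : `|va| + `|vb| <= K by rewrite /K lerDl.
have uK2 : `|vb| + `|va| <= K by rewrite /K [`|vb| + _]addrC lerDl.
have m1 : Num.min r1 r2 <= r1 by rewrite ge_min lexx.
have m2 : Num.min r1 r2 <= r2 by rewrite ge_min lexx orbT.
have b1 : `|G1 x - G1 (d *: vb + (c *: va + x))| < e / 2.
  exact: (B1 _ (close c d va vb r1 ch dh uK1 m1)).
have b2 : `|G2 x - G2 (d' *: va + (c' *: vb + x))| < e / 2.
  exact: (B2 _ (close c' d' vb va r2 ch' dh' uK2 m2)).
rewrite EE in b1.
have := ler_normD (G1 x - G2 (d' *: va + (c' *: vb + x))) (G2 (d' *: va + (c' *: vb + x)) - G2 x).
rewrite distrC in b2.
rewrite addrA subrK.
set z := G2 _ in b1 b2 *.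
set y1 := G1 x in b1 *. set y2 := G2 x in b2 *.
move=> H; apply: le_trans H _; rewrite [X in _ <= X](splitr e).
by apply: lerD; exact: ltW.
Qed.

End S3.


Section S4.
Variable R : realType.
Local Notation V := 'rV[R]_4.
Local Notation Ck := (@Ck R).

Lemma pt4_dec (s x1 x2 x3 : R) : pt4 s x1 x2 x3 =
  x1 *: e4 R (sp 0) + (x2 *: e4 R (sp 1) + (x3 *: e4 R (sp 2) + s *: e4 R ord0)).
Proof.
apply/rowP => k; rewrite !mxE.
by case: k => [[|[|[|[|m]]]] Hm] //=; ring.
Qed.

Lemma pt4E3 (s x1 x2 y : R) : pt4 s x1 x2 y = y *: e4 R (sp 2) + pt4 s x1 x2 0.
Proof.
apply/rowP => k; rewrite !mxE.
by case: k => [[|[|[|[|m]]]] Hm] //=; ring.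
Qed.

Lemma pt4E2 (s x1 y x3 : R) : pt4 s x1 y x3 = y *: e4 R (sp 1) + pt4 s x1 0 x3.
Proof.
apply/rowP => k; rewrite !mxE.
by case: k => [[|[|[|[|m]]]] Hm] //=; ring.
Qed.

Lemma pt4E1 (s y x2 x3 : R) : pt4 s y x2 x3 = y *: e4 R (sp 0) + pt4 s 0 x2 x3.
Proof.
apply/rowP => k; rewrite !mxE.
by case: k => [[|[|[|[|m]]]] Hm] //=; ring.
Qed.

Lemma pt4_per3 (s x1 x2 : R) : pt4 s x1 x2 1 = pt4 s x1 x2 0 + e4 R (sp 2).
Proof. by rewrite pt4E3 scale1r addrC. Qed.
Lemma pt4_per2 (s x1 x3 : R) : pt4 s x1 1 x3 = pt4 s x1 0 x3 + e4 R (sp 1).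
Proof. by rewrite pt4E2 scale1r addrC. Qed.
Lemma pt4_per1 (s x2 x3 : R) : pt4 s 1 x2 x3 = pt4 s 0 x2 x3 + e4 R (sp 0).
Proof. by rewrite pt4E1 scale1r addrC. Qed.

Lemma cont_line (g : V -> R) (v p : V) : continuous g ->
  continuous (fun t : R => g (t *: v + p)).
Proof.
move=> cg t; apply: continuous_comp; last exact: cg.
apply: (@continuousD _ _ _ (fun t : R => t *: v) (fun=> p)).
  exact: scalel_continuous.
exact: cst_continuous.
Qed.

Lemma cont3 (g : V -> R) s x1 x2 : continuous g -> continuous (fun y => g (pt4 s x1 x2 y)).
Proof.
move=> cg; have -> : (fun y => g (pt4 s x1 x2 y)) = (fun y => g (y *: e4 R (sp 2) + pt4 s x1 x2 0)).
  by apply/funext => y; rewrite -pt4E3.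
exact: cont_line.
Qed.
Lemma cont2 (g : V -> R) s x1 x3 : continuous g -> continuous (fun y => g (pt4 s x1 y x3)).
Proof.
move=> cg; have -> : (fun y => g (pt4 s x1 y x3)) = (fun y => g (y *: e4 R (sp 1) + pt4 s x1 0 x3)).
  by apply/funext => y; rewrite -pt4E2.
exact: cont_line.
Qed.
Lemma cont1 (g : V -> R) s x2 x3 : continuous g -> continuous (fun y => g (pt4 s y x2 x3)).
Proof.
move=> cg; have -> : (fun y => g (pt4 s y x2 x3)) = (fun y => g (y *: e4 R (sp 0) + pt4 s 0 x2 x3)).
  by apply/funext => y; rewrite -pt4E1.
exact: cont_line.
Qed.

Lemma box_bound (g : V -> R) (s : R) : continuous g ->
  exists M, forall x1 x2 x3, -1 <= x1 <= 2 -> -1 <= x2 <= 2 -> -1 <= x3 <= 2 ->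
    `|g (pt4 s x1 x2 x3)| <= M.
Proof.
move=> cg.
pose phi := fun z : R * (R * R) => pt4 s z.1 z.2.1 z.2.2.
have cphi : continuous phi.
  have -> : phi = (fun z : R * (R * R) => z.1 *: e4 R (sp 0) + (z.2.1 *: e4 R (sp 1) +
       (z.2.2 *: e4 R (sp 2) + s *: e4 R ord0))).
    by apply/funext => z; rewrite /phi pt4_dec.
  have c1 : continuous (fun z : R * (R * R) => z.1) by move=> w; exact: cvg_fst.
  have c2 : continuous (fun z : R * (R * R) => z.2.1).
    move=> w; apply: (@continuous_comp _ _ _ snd fst); last exact: cvg_fst.
    exact: cvg_snd.
  have c3 : continuous (fun z : R * (R * R) => z.2.2).
    move=> w; apply: (@continuous_comp _ _ _ snd snd); last exact: cvg_snd.
    exact: cvg_snd.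
  have cs (f : R * (R * R) -> R) (v : V) : continuous f -> continuous (fun z => f z *: v).
    move=> cf w; apply: (@continuous_comp _ _ _ f (fun k : R => k *: v)).
      exact: cf.
    exact: scalel_continuous.
  have cD (f1 f2 : R * (R * R) -> V) : continuous f1 -> continuous f2 ->
      continuous (fun z => f1 z + f2 z).
    by move=> cf1 cf2 w; exact: (continuousD (cf1 w) (cf2 w)).
  apply: (cD); first exact: (cs).
  apply: (cD); first exact: (cs).
  apply: (cD); first exact: (cs).
  exact: cst_continuous.
pose I : set R := `[-1, 2]%classic.
pose A := I `*` (I `*` I).
have cA : compact A.
  apply: compact_setX; first exact: segment_compact.
  apply: compact_setX; exact: segment_compact.
have cgphi : {within A, continuous (g \o phi)}.
  apply: continuous_subspaceT => z; apply: continuous_comp; [exact: cphi|exact: cg].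
have /compact_bounded [M [_ HM]] := continuous_compact cgphi cA.
exists (M + 1) => x1 x2 x3 h1 h2 h3.
have M1 : M < M + 1 by rewrite ltrDl.
have := HM (M + 1) M1 (g (phi (x1, (x2, x3)))).
apply; exists (x1, (x2, x3)) => //.
Qed.

End S4.


Section S5.
Variable R : realType.
Local Notation V := 'rV[R]_4.
Local Notation mu := (@lebesgue_measure R).

Lemma int01 (f : R -> R) : {within `[0, 1], continuous f} ->
  mu.-integrable `[0, 1] (EFin \o f).
Proof. move=> cf; apply: continuous_compact_integrable => //; exact: segment_compact. Qed.

Lemma int01c (f : R -> R) : continuous f -> mu.-integrable `[0, 1] (EFin \o f).
Proof. by move=> cf; apply: int01; exact: continuous_subspaceT. Qed.

Lemma within01 (f : R -> R) :
  (forall x, -1 < x < 2 -> {for x, continuous f}) -> {within `[0, 1], continuous f}.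
Proof.
move=> cf; apply: continuous_in_subspaceT => x; rewrite inE /= in_itv /= => /andP[x0 x1].
apply: cf; apply/andP; split; lra.
Qed.

Lemma cparam (f : R -> R -> R) (M : R) :
  (forall x, -1 < x < 2 -> mu.-integrable `[0, 1] (EFin \o f x)) ->
  (forall x y, -1 < x < 2 -> 0 <= y <= 1 -> {for x, continuous (f ^~ y)}) ->
  (forall x y, -1 < x < 2 -> 0 <= y <= 1 -> `|f x y| <= M) ->
  forall x, -1 < x < 2 ->
    {for x, continuous (fun x => \int[mu]_(y in `[0, 1]) f x y)}.
Proof.
move=> intf cf fM x x12.
have := @continuity_under_integral R _ _ mu f `[0, 1] (measurable_itv _) (-1) 2.
move=> /(_ _ _ (cst M)); apply.
- by move=> z; rewrite /= in_itv /=; exact: intf.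
- apply: aeW => y; rewrite /= in_itv /= => y01 z; rewrite inE /= in_itv /= => z12.
  exact: cf.
- by apply: int01c; exact: cst_continuous.
- move=> z; rewrite /= in_itv /= => z12; apply: aeW => y; rewrite /= in_itv /= => y01.
  exact: fM.
- by rewrite inE /= in_itv.
Qed.

Lemma dparam (f df : R -> R -> R) (M : R) :
  (forall x, -1 < x < 2 -> mu.-integrable `[0, 1] (EFin \o f x)) ->
  (forall x y : R, -1 < x < 2 -> 0 <= y <= 1 -> is_derive x 1 (f ^~ y) (df x y)) ->
  (forall x y, -1 < x < 2 -> 0 <= y <= 1 -> `|df x y| <= M) ->
  forall x : R, -1 < x < 2 ->
    is_derive x 1 (fun x => \int[mu]_(y in `[0, 1]) f x y)
                  (\int[mu]_(y in `[0, 1]) df x y).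
Proof.
move=> intf Df dfM x x12.
have M0 : 0 <= M.
  apply: le_trans (dfM 0 0 _ _); rewrite ?normr_ge0 //; apply/andP; split; lra.
have Ix : `]-1, 2[%classic x by rewrite /= in_itv /=.
have H1 : forall z, `]-1, 2[%classic z -> mu.-integrable `[0, 1] (EFin \o f z).
  by move=> z; rewrite /= in_itv /=; exact: intf.
have H2 : forall z y, `]-1, 2[%classic z -> `[0, 1]%classic y -> derivable (f ^~ y) z 1.
  move=> z y; rewrite /= !in_itv /= => z12 y01; exact: (Df z y z12 y01).(ex_derive).
have H3 : forall z y, `]-1, 2[%classic z -> `[0, 1]%classic y ->
    `|partial1of2 f z y| <= cst M y.
  move=> z y; rewrite /= !in_itv /= => z12 y01.
  rewrite /partial1of2 derive1E (Df z y z12 y01).(derive_val); exact: dfM.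
have H4 : mu.-integrable `[0, 1] (EFin \o cst M) by apply: int01c; exact: cst_continuous.
have e : \int[mu]_(y in `[0, 1]) partial1of2 f ^~ y x = \int[mu]_(y in `[0, 1]) df x y.
  apply: eq_Rintegral => y; rewrite inE /= in_itv /= => y01.
  by rewrite /partial1of2 derive1E (Df x y x12 y01).(derive_val).
split.
  exact: (@derivable_under_integral R _ _ mu f `[0, 1] (measurable_itv _) x (-1) 2 Ix H1 H2 (cst M) (fun=> M0) H4 H3).
rewrite -derive1E -e.
exact: (@differentiation_under_integral R _ _ mu f `[0, 1] (measurable_itv _) x (-1) 2 Ix H1 H2 (cst M) (fun=> M0) H4 H3).
Qed.

Lemma ftc01 (F f : R -> R) :
  (forall x : R, -1 < x < 2 -> is_derive x 1 F (f x)) ->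
  {within `[0, 1], continuous f} -> F 1 = F 0 ->
  \int[mu]_(x in `[0, 1]) f x = 0.
Proof.
move=> DF cf F10.
have cF x : -1 < x < 2 -> {for x, continuous F}.
  move=> x12; apply/differentiable_continuous/derivable1_diffP.
  exact: (DF x x12).(ex_derive).
rewrite /Rintegral (@continuous_FTC2 R f F 0 1) //.
- by rewrite -EFinB /= F10 subrr.
- split.
  + move=> x; rewrite in_itv /= => /andP[x0 x1].
    apply: (DF x _).(ex_derive); apply/andP; split; lra.
  + apply: cvg_at_right_filter; apply: cF; apply/andP; split; lra.
  + apply: cvg_at_left_filter; apply: cF; apply/andP; split; lra.
- move=> x; rewrite in_itv /= => /andP[x0 x1].
  rewrite derive1E; apply: (DF x _).(derive_val); apply/andP; split; lra.
Qed.

End S5.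


Section S6.
Variable R : realType.
Local Notation V := 'rV[R]_4.
Local Notation mu := (@lebesgue_measure R).

Definition I3 (g : V -> R) (s x1 x2 : R) : R :=
  \int[mu]_(x3 in `[0, 1]) g (pt4 s x1 x2 x3).
Definition I2 (g : V -> R) (s x1 : R) : R :=
  \int[mu]_(x2 in `[0, 1]) I3 g s x1 x2.
Definition I1 (g : V -> R) (s : R) : R :=
  \int[mu]_(x1 in `[0, 1]) I2 g s x1.

Lemma bound01 (f : R -> R) M : mu.-integrable `[0, 1] (EFin \o f) ->
  (forall y, 0 <= y <= 1 -> `|f y| <= M) ->
  `|\int[mu]_(y in `[0, 1]) f y| <= M.
Proof.
move=> intf fM.
have mu1 : fine (mu `[0, 1]%classic) = 1.
  by rewrite lebesgue_measure_itv /= lte_fin ltr01 /= subr0.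
have icM (c : R) : mu.-integrable `[0, 1] (EFin \o (fun _ : R => c)).
  by apply: int01c; exact: cst_continuous.
have h1 : \int[mu]_(y in `[0, 1]) f y <= \int[mu]_(y in `[0, 1]) M.
  apply: le_Rintegral => //; try exact: (icM _).
  move=> y; rewrite /= in_itv /= => y01; have := fM y y01; rewrite ler_norml.
  by case/andP.
have h2 : \int[mu]_(y in `[0, 1]) (- M) <= \int[mu]_(y in `[0, 1]) f y.
  apply: le_Rintegral => //; try exact: (icM _).
  move=> y; rewrite /= in_itv /= => y01; have := fM y y01; rewrite ler_norml.
  by case/andP.
rewrite Rintegral_cst ?mu1 ?mulr1 in h1; last exact: measurable_itv.
rewrite Rintegral_cst ?mu1 ?mulr1 in h2; last exact: measurable_itv.
by rewrite ler_norml h1 h2.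
Qed.

Section cont.
Variable g : V -> R.
Hypothesis cg : continuous g.

Lemma int3 s x1 x2 : mu.-integrable `[0, 1] (EFin \o (fun x3 => g (pt4 s x1 x2 x3))).
Proof. by apply: int01c; exact: cont3. Qed.

Lemma bound3 s : exists M, forall x1 x2, -1 <= x1 <= 2 -> -1 <= x2 <= 2 ->
  `|I3 g s x1 x2| <= M.
Proof.
have [M HM] := box_bound s cg.
exists M => x1 x2 h1 h2; apply: bound01; first exact: int3.
move=> y /andP[y0 y1]; apply: HM => //; apply/andP; split; lra.
Qed.

Lemma c3_x2 s x1 x2 : -1 <= x1 <= 2 -> -1 < x2 < 2 ->
  {for x2, continuous (fun x2 => I3 g s x1 x2)}.
Proof.
move=> h1 h2; have [M HM] := box_bound s cg.
apply: (@cparam R (fun x2 x3 => g (pt4 s x1 x2 x3)) M) => //.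
- by move=> z _; exact: int3.
- by move=> z y _ _; exact: (@cont2 R g s x1 y cg z).
- move=> z y /andP[z1 z2] /andP[y0 y1]; apply: HM => //; apply/andP; split; lra.
Qed.

Lemma c3_x1 s x1 x2 : -1 < x1 < 2 -> -1 <= x2 <= 2 ->
  {for x1, continuous (fun x1 => I3 g s x1 x2)}.
Proof.
move=> h1 h2; have [M HM] := box_bound s cg.
apply: (@cparam R (fun x1 x3 => g (pt4 s x1 x2 x3)) M) => //.
- by move=> z _; exact: int3.
- by move=> z y _ _; exact: (@cont1 R g s x2 y cg z).
- move=> z y /andP[z1 z2] /andP[y0 y1]; apply: HM => //; apply/andP; split; lra.
Qed.

Lemma int2 s x1 : -1 <= x1 <= 2 ->
  mu.-integrable `[0, 1] (EFin \o (fun x2 => I3 g s x1 x2)).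
Proof.
move=> h1; apply: int01; apply: within01 => x2 h2; exact: c3_x2.
Qed.

Lemma c2_x1 s x1 : -1 < x1 < 2 -> {for x1, continuous (fun x1 => I2 g s x1)}.
Proof.
move=> h1; have [M HM] := bound3 s.
apply: (@cparam R (fun x1 x2 => I3 g s x1 x2) M) => //.
- move=> z /andP[z1 z2]; apply: int2; apply/andP; split; lra.
- move=> z y hz /andP[y0 y1]; apply: c3_x1 => //; apply/andP; split; lra.
- move=> z y /andP[z1 z2] /andP[y0 y1]; apply: HM; apply/andP; split; lra.
Qed.

Lemma int1 s : mu.-integrable `[0, 1] (EFin \o (fun x1 => I2 g s x1)).
Proof. apply: int01; apply: within01 => x1 h1; exact: c2_x1. Qed.

End cont.

Lemma I1_add (f g : V -> R) s : continuous f -> continuous g ->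
  I1 (fun x => f x + g x) s = I1 f s + I1 g s.
Proof.
move=> cf cg; rewrite /I1 -RintegralD; [|exact: measurable_itv|exact: int1|exact: int1].
apply: eq_Rintegral => x1; rewrite inE /= in_itv /= => /andP[a1 b1].
have h1 : -1 <= x1 <= 2 by apply/andP; split; lra.
rewrite /I2 -RintegralD; [|exact: measurable_itv|exact: int2|exact: int2].
apply: eq_Rintegral => x2 _.
by rewrite /I3 -RintegralD; [|exact: measurable_itv|exact: int3|exact: int3].
Qed.

Lemma I1_sub (f g : V -> R) s : continuous f -> continuous g ->
  I1 (fun x => f x - g x) s = I1 f s - I1 g s.
Proof.
move=> cf cg; rewrite /I1 -RintegralB; [|exact: measurable_itv|exact: int1|exact: int1].
apply: eq_Rintegral => x1; rewrite inE /= in_itv /= => /andP[a1 b1].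
have h1 : -1 <= x1 <= 2 by apply/andP; split; lra.
rewrite /I2 -RintegralB; [|exact: measurable_itv|exact: int2|exact: int2].
apply: eq_Rintegral => x2 _.
by rewrite /I3 -RintegralB; [|exact: measurable_itv|exact: int3|exact: int3].
Qed.

Lemma I1_0 s : I1 (fun _ => 0) s = 0.
Proof.
rewrite /I1 /I2 /I3.
have mu1 : fine (mu `[0, 1]%classic) = 1.
  by rewrite lebesgue_measure_itv /= lte_fin ltr01 /= subr0.
rewrite Rintegral_cst ?mu1 ?mulr1 ?Rintegral_cst ?mu1 ?mulr1 ?Rintegral_cst ?mu1 ?mulr1 //;
  exact: measurable_itv.
Qed.

Lemma cont_sum n (F : 'I_n -> V -> R) : (forall i, continuous (F i)) ->
  continuous (fun x => \sum_(i < n) F i x).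
Proof.
move=> cF; apply: (@Ck_cont R 0); apply: Ck_sum => i; exact: cF.
Qed.

Lemma I1_sum n (F : 'I_n -> V -> R) s : (forall i, continuous (F i)) ->
  I1 (fun x => \sum_(i < n) F i x) s = \sum_(i < n) I1 (F i) s.
Proof.
elim: n F => [|n IH] F cF.
  have -> : (fun x => \sum_(i < 0) F i x) = (fun _ => 0).
    by apply/funext => x; rewrite big_ord0.
  by rewrite I1_0 big_ord0.
have -> : (fun x => \sum_(i < n.+1) F i x) =
   (fun x => \sum_(i < n) F (widen_ord (leqnSn n) i) x + F ord_max x).
  by apply/funext => x; rewrite big_ord_recr.
rewrite I1_add //; last by apply: cont_sum => i; exact: cF.
by rewrite IH // big_ord_recr.
Qed.

End S6.


Section S7.
Variable R : realType.
Local Notation V := 'rV[R]_4.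
Local Notation mu := (@lebesgue_measure R).

Section F.
Variable F : V -> R.

Lemma der3 s x1 x2 (y : R) : (forall x, derivable F x (e4 R (sp 2))) ->
  is_derive y 1 (fun y => F (pt4 s x1 x2 y)) ('D_(e4 R (sp 2)) F (pt4 s x1 x2 y)).
Proof.
move=> dF.
have := is_derive_line (dF (y *: e4 R (sp 2) + pt4 s x1 x2 0)).
have -> : (fun t : R => F (t *: e4 R (sp 2) + pt4 s x1 x2 0)) = (fun y => F (pt4 s x1 x2 y)).
  by apply/funext => t; rewrite -pt4E3.
by rewrite -pt4E3.
Qed.

Lemma der2 s x1 x3 (y : R) : (forall x, derivable F x (e4 R (sp 1))) ->
  is_derive y 1 (fun y => F (pt4 s x1 y x3)) ('D_(e4 R (sp 1)) F (pt4 s x1 y x3)).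
Proof.
move=> dF.
have := is_derive_line (dF (y *: e4 R (sp 1) + pt4 s x1 0 x3)).
have -> : (fun t : R => F (t *: e4 R (sp 1) + pt4 s x1 0 x3)) = (fun y => F (pt4 s x1 y x3)).
  by apply/funext => t; rewrite -pt4E2.
by rewrite -pt4E2.
Qed.

Lemma der1 s x2 x3 (y : R) : (forall x, derivable F x (e4 R (sp 0))) ->
  is_derive y 1 (fun y => F (pt4 s y x2 x3)) ('D_(e4 R (sp 0)) F (pt4 s y x2 x3)).
Proof.
move=> dF.
have := is_derive_line (dF (y *: e4 R (sp 0) + pt4 s 0 x2 x3)).
have -> : (fun t : R => F (t *: e4 R (sp 0) + pt4 s 0 x2 x3)) = (fun y => F (pt4 s y x2 x3)).
  by apply/funext => t; rewrite -pt4E1.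
by rewrite -pt4E1.
Qed.

Hypothesis CF : Ck 1 F.
Hypothesis perF : periodic_x F.

Let cF : continuous F := Ck_cont CF.
Let cD k : continuous ('D_(e4 R k) F) := Ck_cont (Ck_D k CF).
Let dF k x : derivable F x (e4 R k) := Ck_der (k:=k) (x:=x) CF.
Arguments cF : clear implicits.
Arguments cD : clear implicits.
Arguments dF : clear implicits.

Lemma Z3 s x1 x2 : I3 ('D_(e4 R (sp 2)) F) s x1 x2 = 0.
Proof.
rewrite /I3; refine (@ftc01 R (fun y => F (pt4 s x1 x2 y)) (fun y => 'D_(e4 R (sp 2)) F (pt4 s x1 x2 y)) _ _ _).
- by move=> y _; exact: der3.
- apply: continuous_subspaceT.
exact: (cont3 (cD (sp 2))).
- by rewrite pt4_per3 perF.
Qed.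

Lemma Z2 s x1 : -1 <= x1 <= 2 -> I2 ('D_(e4 R (sp 1)) F) s x1 = 0.
Proof.
move=> h1; rewrite /I2; apply: (@ftc01 R (fun x2 => I3 F s x1 x2)).
- move=> x2 h2; have [M HM] := box_bound s (cD (sp 1)).
  apply: (@dparam R (fun x2 x3 => F (pt4 s x1 x2 x3))
                    (fun x2 x3 => 'D_(e4 R (sp 1)) F (pt4 s x1 x2 x3)) M) => //.
  + by move=> z _; exact: (int3 cF).
  + by move=> z y _ _; exact: der2.
  + move=> z y /andP[z1 z2] /andP[y0 y1]; apply: HM => //; apply/andP; split; lra.
- by apply: within01 => x2 h2; apply: (c3_x2 (cD (sp 1))).
- by rewrite /I3; apply: eq_Rintegral => x3 _; rewrite pt4_per2 perF.
Qed.

Lemma Z1 s : I1 ('D_(e4 R (sp 0)) F) s = 0.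
Proof.
rewrite /I1; apply: (@ftc01 R (fun x1 => I2 F s x1)).
- move=> x1 h1; have [M HM] := bound3 (cD (sp 0)) s.
  have [M' HM'] := box_bound s (cD (sp 0)).
  apply: (@dparam R (fun x1 x2 => I3 F s x1 x2)
                    (fun x1 x2 => I3 ('D_(e4 R (sp 0)) F) s x1 x2) M) => //.
  + move=> z /andP[z1 z2]; apply: (int2 cF) => //; apply/andP; split; lra.
  + move=> z x2 hz /andP[y0 y1].
    apply: (@dparam R (fun x1 x3 => F (pt4 s x1 x2 x3))
                      (fun x1 x3 => 'D_(e4 R (sp 0)) F (pt4 s x1 x2 x3)) M') => //.
    * by move=> w _; exact: (int3 cF).
    * by move=> w y _ _; exact: der1.
    * move=> w y /andP[w1 w2] /andP[y0' y1']; apply: HM' => //; apply/andP; split; lra.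
  + move=> z y /andP[z1 z2] /andP[y0 y1]; apply: HM; apply/andP; split; lra.
- by apply: within01 => x1 h1; apply: (c2_x1 (cD (sp 0))).
- rewrite /I2 /I3; apply: eq_Rintegral => x2 _; apply: eq_Rintegral => x3 _.
  by rewrite pt4_per1 perF.
Qed.

End F.
End S7.


Section S8.
Variable R : realType.
Variable I : finType.
Variable s : I -> I.
Hypothesis sK : involutive s.

Lemma sum_inv (F : I -> R) : \sum_p F (s p) = \sum_p F p.
Proof. by rewrite [RHS](reindex_inj (inv_inj sK)). Qed.

Lemma alg (a b c : I -> R) (Bp r d B : R) :
  (forall p, a (s p) = a p) -> 0 < Bp -> -1 <= 2 * r -> 0 < d ->
  (forall p, b p = (c p + c (s p)) / 2) ->
  B = \sum_p a p ^+ 2 + d ^+ 2 ->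
  0 <= \sum_p (Bp * b p + a p * (Bp * (r * (B^-1 * \sum_q (2 * a q * b q))))) * c p.
Proof.
move=> as_ Bp0 r1 d0 Hb HB.
have bs p : b (s p) = b p by rewrite !Hb sK addrC.
have A0 : 0 <= \sum_p a p ^+ 2 by apply: sumr_ge0 => p _; exact: sqr_ge0.
have B0 : 0 < B by rewrite HB ltr_wpDl // exprn_gt0.
set Sb := \sum_p b p ^+ 2.
set C := \sum_p a p * b p.
have Ebc : \sum_p b p * c p = Sb.
  have E1 : \sum_p b p * c (s p) = \sum_p b p * c p.
    by rewrite -[RHS](sum_inv (fun p => b p * c p)); apply: eq_bigr => p _; rewrite bs.
  rewrite /Sb; symmetry.
  transitivity (\sum_p ((b p * c p) / 2 + (b p * c (s p)) / 2)).
    by apply: eq_bigr => p _; rewrite expr2 {2}Hb; ring.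
  by rewrite big_split /= -!mulr_suml E1; field.
have Eac : \sum_p a p * c p = C.
  have E1 : \sum_p a p * c (s p) = \sum_p a p * c p.
    by rewrite -[RHS](sum_inv (fun p => a p * c p)); apply: eq_bigr => p _; rewrite as_.
  rewrite /C; symmetry.
  transitivity (\sum_p ((a p * c p) / 2 + (a p * c (s p)) / 2)).
    by apply: eq_bigr => p _; rewrite Hb; ring.
  by rewrite big_split /= -!mulr_suml E1; field.
have E2 : \sum_q (2 * a q * b q) = 2 * C.
  by rewrite /C mulr_sumr; apply: eq_bigr => q _; ring.
have EP : \sum_p (Bp * b p + a p * (Bp * (r * (B^-1 * \sum_q (2 * a q * b q))))) * c p
   = Bp * Sb + Bp * (r * (B^-1 * (2 * C))) * C.
  rewrite E2; set K := Bp * (r * (B^-1 * (2 * C))).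
  have -> : Bp * Sb + K * C = Bp * (\sum_p b p * c p) + K * (\sum_p a p * c p).
    by rewrite Ebc Eac.
  rewrite !mulr_sumr -big_split /=.
  by apply: eq_bigr => p _; rewrite /K; ring.
rewrite EP.
have CS : C ^+ 2 <= B * Sb.
  have H0 : 0 <= \sum_p (B * b p - C * a p) ^+ 2 by apply: sumr_ge0 => p _; exact: sqr_ge0.
  have EH : \sum_p (B * b p - C * a p) ^+ 2 =
      B ^+ 2 * Sb - 2 * B * C * C + C ^+ 2 * \sum_p a p ^+ 2.
    have -> : B ^+ 2 * Sb - 2 * B * C * C + C ^+ 2 * \sum_p a p ^+ 2 =
        \sum_p (B ^+ 2 * b p ^+ 2 - 2 * B * C * (a p * b p) + C ^+ 2 * a p ^+ 2).
      by rewrite big_split sumrB /= -!mulr_sumr /Sb /C.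
    by apply: eq_bigr => p _; ring.
  rewrite EH in H0.
  have EA : \sum_p a p ^+ 2 = B - d ^+ 2 by rewrite HB addrK.
  rewrite EA in H0.
  have : 0 <= B * (B * Sb - C ^+ 2) - C ^+ 2 * d ^+ 2.
    by move: H0; congr (_ <= _); ring.
  have Cd : 0 <= C ^+ 2 * d ^+ 2 by apply: mulr_ge0; exact: sqr_ge0.
  move=> H1.
  have : 0 <= B * (B * Sb - C ^+ 2) by lra.
  by rewrite pmulr_rge0 // subr_ge0.
have Sb0 : 0 <= Sb by apply: sumr_ge0 => p _; exact: sqr_ge0.
have -> : Bp * Sb + Bp * (r * (B^-1 * (2 * C))) * C =
    Bp * B^-1 * (B * Sb + (2 * r) * C ^+ 2).
  by field; rewrite gt_eqF.
apply: mulr_ge0; first by apply: mulr_ge0; [exact: ltW | rewrite invr_ge0 ltW].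
have C0 : 0 <= C ^+ 2 by exact: sqr_ge0.
nra.
Qed.

End S8.


Section S9.
Variable R : realType.
Local Notation V := 'rV[R]_4.

Lemma is_derive_sumf n (F : 'I_n -> V -> R) (dF : 'I_n -> R) x v :
  (forall i, is_derive x v (F i) (dF i)) ->
  is_derive x v (fun y => \sum_(i < n) F i y) (\sum_(i < n) dF i).
Proof. by move=> H; rewrite -fct_sumE; exact: is_derive_sum. Qed.

Lemma is_derive_sqr (f : V -> R) x v : derivable f x v ->
  is_derive x v (fun y => f y ^+ 2) (2 * f x * 'D_v f x).
Proof.
move=> df; have H := is_deriveM (derivableP df) (derivableP df).
have -> : 2 * f x * 'D_v f x = f x *: 'D_v f x + f x *: 'D_v f x.
  by rewrite /GRing.scale /=; ring.
exact: H.
Qed.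

Lemma D_half (f g : V -> R) x v : derivable f x v -> derivable g x v ->
  'D_v (fun y => (f y + g y) / 2) x = ('D_v f x + 'D_v g x) / 2.
Proof.
move=> df dg.
have H1 := is_deriveD (derivableP df) (derivableP dg).
have H2 := is_deriveM H1 (is_derive_cst (2^-1 : R) x v).
have H3 : is_derive x v (fun y => (f y + g y) / 2) ((f x + g x) *: 0 + 2^-1 *: ('D_v f x + 'D_v g x)).
  exact: H2.
rewrite H3.(derive_val) scaler0 add0r /GRing.scale /=; ring.
Qed.

Lemma per_D (f : V -> R) v : periodic_x f -> periodic_x ('D_v f).
Proof.
move=> pf j x; rewrite /derive.
have -> : (fun h : R => h^-1 *: ((f \o shift (x + e4 R (sp j))) (h *: v) - f (x + e4 R (sp j))))
   = (fun h : R => h^-1 *: ((f \o shift x) (h *: v) - f x)).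
  by apply/funext => h /=; rewrite addrA !pf.
by [].
Qed.

End S9.


Section S10.
Variable R : realType.
Local Notation V := 'rV[R]_4.
Local Notation Ck := (@Ck R).
Variables (delta q : R) (u : 'I_3 -> V -> R).
Hypotheses (d0 : 0 < delta) (q1 : 1 <= q).
Hypothesis su : forall i, smooth (u i).
Hypothesis pu : forall i, periodic_x (u i).

Local Notation e0 := (e4 R ord0).
Local Notation es j := (e4 R (sp j)).

Lemma Cu n i : Ck n (u i).
Proof. exact: smooth_Ck. Qed.

Lemma Ck_sqr n (f : V -> R) : Ck n f -> Ck n (fun x => f x ^+ 2).
Proof.
move=> Cf; have -> : (fun x => f x ^+ 2) = (fun x => f x * f x).
  by apply/funext => x; rewrite expr2.
exact: Ck_mul.
Qed.

Lemma CD n i j : Ck n (symgrad u i j).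
Proof.
have -> : symgrad u i j = (fun x => (dx j (u i) x + dx i (u j) x) * 2^-1) by [].
apply: Ck_mul; last exact: Ck_cst.
apply: Ck_add; exact: (Ck_D _ (Cu n.+1 _)).
Qed.

Lemma CB n : Ck n (Bfun delta u).
Proof.
have -> : Bfun delta u = (fun x => \sum_(i < 3) (fun x => \sum_(j < 3) symgrad u i j x ^+ 2) x
   + delta ^+ 2) by [].
apply: Ck_add; last exact: Ck_cst.
apply: Ck_sum => i; apply: Ck_sum => j; apply: Ck_sqr; exact: CD.
Qed.

Lemma Bpos x : 0 < Bfun delta u x.
Proof.
rewrite /Bfun ltr_wpDl ?exprn_gt0 //.
by apply: sumr_ge0 => i _; apply: sumr_ge0 => j _; exact: sqr_ge0.
Qed.

Definition rr := (q - 2) / 2.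
Definition Bp := fun x => expR (rr * ln (Bfun delta u x)).

Lemma CBp n : Ck n Bp.
Proof. apply: Ck_exp; apply: Ck_scale; apply: Ck_ln; [exact: Bpos|exact: CB]. Qed.

Lemma SE i j : stress delta q u i j = (fun x => Bp x * symgrad u i j x).
Proof.
apply/funext => x; rewrite /stress /powR gt_eqF ?Bpos //.
Qed.

Lemma CS n i j : Ck n (stress delta q u i j).
Proof. rewrite SE; apply: Ck_mul; [exact: CBp|exact: CD]. Qed.

Lemma pD i j : periodic_x (symgrad u i j).
Proof. by move=> k x; rewrite /symgrad /dx !per_D. Qed.

Lemma pB : periodic_x (Bfun delta u).
Proof.
move=> k x; rewrite /Bfun /symgrad_norm2; congr (_ + _).
by apply: eq_bigr => i _; apply: eq_bigr => j _; rewrite pD.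
Qed.

Lemma pS i j : periodic_x (stress delta q u i j).
Proof. by rewrite SE => k x; rewrite /Bp pB pD. Qed.


Definition Ut i := 'D_e0 (u i).
Definition T i j := 'D_e0 (stress delta q u i j).
Definition G i j := fun x => Ut i x * T i j x.
Definition Pij i j := fun x => T i j x * 'D_(es j) (Ut i) x.

Lemma CG n i j : Ck n (G i j).
Proof. apply: Ck_mul; [exact: (Ck_D _ (Cu n.+1 i))|exact: (Ck_D _ (CS n.+1 i j))]. Qed.

Lemma pG i j : periodic_x (G i j).
Proof. by move=> k x; rewrite /G /Ut /T !per_D //; exact: pS. Qed.

Lemma cP i j : continuous (Pij i j).
Proof.
apply: (@Ck_cont R 0); apply: Ck_mul; first exact: (Ck_D _ (CS 1 i j)).
exact: (Ck_D _ (Ck_D _ (Cu 2 i))).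
Qed.

Lemma cDG i j : continuous ('D_(es j) (G i j)).
Proof. exact: (Ck_cont (Ck_D _ (CG 1 i j))). Qed.

Lemma Jid x : Jintegrand delta q u x =
  \sum_(i < 3) \sum_(j < 3) (Pij i j x - 'D_(es j) (G i j) x).
Proof.
rewrite /Jintegrand.
have E1 i : dt (div_stress delta q u i) x = \sum_(j < 3) 'D_(es j) (T i j) x.
  have H : is_derive x e0 (fun y => \sum_(j < 3) dx j (stress delta q u i j) y)
      (\sum_(j < 3) 'D_e0 ('D_(es j) (stress delta q u i j)) x).
    apply: is_derive_sumf => j; apply: derivableP; apply: Ck_der.
    exact: (Ck_D _ (CS 2 i j)).
  rewrite /dt /div_stress H.(derive_val); apply: eq_bigr => j _.
  exact: (congr1 (fun f => f x) (clairaut (sp j) ord0 (CS 2 i j))).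
have E2 i j : 'D_(es j) (G i j) x =
    Ut i x * 'D_(es j) (T i j) x + T i j x * 'D_(es j) (Ut i) x.
  have d1 : derivable (Ut i) x (es j) by apply: Ck_der; exact: (Ck_D _ (Cu 2 i)).
  have d2 : derivable (T i j) x (es j) by apply: Ck_der; exact: (Ck_D _ (CS 2 i j)).
  exact: (deriveM d1 d2).
rewrite -sumrN; apply: eq_bigr => i _.
rewrite E1 mulr_sumr -sumrN; apply: eq_bigr => j _.
rewrite E2 /Pij /Ut /dt; ring.
Qed.

Lemma Ppos x : 0 <= \sum_(i < 3) \sum_(j < 3) Pij i j x.
Proof.
pose a := fun i j => symgrad u i j x.
pose c := fun i j => 'D_(es j) (Ut i) x.
pose b := fun i j => 'D_e0 (symgrad u i j) x.
have Hb i j : b i j = (c i j + c j i) / 2.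
  rewrite /b /c.
  have -> : symgrad u i j = (fun y => (dx j (u i) y + dx i (u j) y) / 2) by [].
  rewrite D_half; first last.
  - by apply: Ck_der; exact: (Ck_D _ (Cu 2 j)).
  - by apply: Ck_der; exact: (Ck_D _ (Cu 2 i)).
  rewrite /dx /Ut (congr1 (fun f => f x) (clairaut (sp j) ord0 (Cu 2 i))).
  by rewrite (congr1 (fun f => f x) (clairaut (sp i) ord0 (Cu 2 j))).
have dD i j : derivable (symgrad u i j) x e0 by apply: Ck_der; exact: (CD 1 i j).
have HB : is_derive x e0 (Bfun delta u)
    (\sum_(k < 3) \sum_(l < 3) (2 * a k l * b k l) + 0).
  have H1 : is_derive x e0 (fun y => \sum_(k < 3) \sum_(l < 3) symgrad u k l y ^+ 2)
      (\sum_(k < 3) \sum_(l < 3) (2 * a k l * b k l)).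
    apply: is_derive_sumf => k; apply: is_derive_sumf => l.
    exact: is_derive_sqr.
  exact: (is_deriveD H1 (is_derive_cst (delta ^+ 2) x e0)).
have dB : derivable (Bfun delta u) x e0 := HB.(ex_derive).
have HlnB : is_derive x e0 (fun y => ln (Bfun delta u y))
    ((Bfun delta u x)^-1 * 'D_e0 (Bfun delta u) x).
  apply: (D_comp (dphi := fun z => z^-1)) => //; exact: is_derive1_ln (Bpos x).
have HrlnB : is_derive x e0 (fun y => rr * ln (Bfun delta u y))
    (rr *: ((Bfun delta u x)^-1 * 'D_e0 (Bfun delta u) x)).
  exact: (is_deriveZ rr HlnB).
have HBp : is_derive x e0 (fun y => expR (rr * ln (Bfun delta u y))) (expR (rr * ln (Bfun delta u x)) *
    'D_e0 (fun y => rr * ln (Bfun delta u y)) x).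
  apply: (D_comp (dphi := expR)); first exact: HrlnB.(ex_derive).
have HT i j : T i j x = Bp x * b i j + a i j * 'D_e0 Bp x.
  rewrite /T SE.
  exact: (deriveM HBp.(ex_derive) (dD i j)).
have EP : \sum_(i < 3) \sum_(j < 3) Pij i j x =
  \sum_(p : 'I_3 * 'I_3) (Bp x * b p.1 p.2 + a p.1 p.2 * (Bp x * (rr *
     ((Bfun delta u x)^-1 * \sum_(p' : 'I_3 * 'I_3) (2 * a p'.1 p'.2 * b p'.1 p'.2)))))
     * c p.1 p.2.
  rewrite pair_bigA; apply: eq_bigr => p _.
  rewrite /Pij HT HBp.(derive_val) HrlnB.(derive_val) HB.(derive_val) addr0 pair_bigA /c.
  by rewrite /GRing.scale /=.
rewrite EP.
have sK : involutive (fun p : 'I_3 * 'I_3 => (p.2, p.1)) by case.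
have asym : forall p : 'I_3 * 'I_3, a (p.2, p.1).1 (p.2, p.1).2 = a p.1 p.2.
  by move=> [i j] /=; rewrite /a /symgrad addrC.
have Bp0 : 0 < Bp x by exact: expR_gt0.
have r1 : -1 <= 2 * rr.
  rewrite /rr (_ : 2 * ((q - 2) / 2) = q - 2); last by field.
  by rewrite lerBrDr (_ : -1 + 2 = 1 :> R) //; ring.
have Hb' : forall p : 'I_3 * 'I_3, b p.1 p.2 = (c p.1 p.2 + c (p.2, p.1).1 (p.2, p.1).2) / 2.
  by move=> [i j] /=; exact: Hb.
have HB' : Bfun delta u x = \sum_(p : 'I_3 * 'I_3) a p.1 p.2 ^+ 2 + delta ^+ 2.
  by rewrite /Bfun /symgrad_norm2 pair_bigA.
exact: (alg sK (a := fun p => a p.1 p.2) (b := fun p => b p.1 p.2) (c := fun p => c p.1 p.2)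
   asym Bp0 r1 d0 Hb' HB').
Qed.

End S10.


Section S11.
Variable R : realType.
Local Notation V := 'rV[R]_4.
Local Notation mu := (@lebesgue_measure R).

Lemma I1_div (F : V -> R) s : Ck 1 F -> periodic_x F ->
  forall j : 'I_3, I1 ('D_(e4 R (sp j)) F) s = 0.
Proof.
move=> CF pF j.
case: j => [[|[|[|m]]] Hm] //.
- have -> : Ordinal Hm = 0 by apply: val_inj.
  exact: Z1 CF pF s.
- have -> : Ordinal Hm = 1 by apply: val_inj.
  rewrite /I1; transitivity (\int[mu]_(x1 in `[0, 1]) (0 : R)).
    apply: eq_Rintegral => x1; rewrite inE /= in_itv /= => /andP[a b].
    apply: Z2 => //; apply/andP; split; lra.
  by rewrite Rintegral_cst ?mul0r.
- have -> : Ordinal Hm = 2 by apply: val_inj.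
  rewrite /I1; transitivity (\int[mu]_(x1 in `[0, 1]) (0 : R)).
    apply: eq_Rintegral => x1 _; rewrite /I2.
    transitivity (\int[mu]_(x2 in `[0, 1]) (0 : R)).
      by apply: eq_Rintegral => x2 _; exact: Z3.
    by rewrite Rintegral_cst ?mul0r.
  by rewrite Rintegral_cst ?mul0r.
Qed.

End S11.

Theorem lemma4p1 (R : realType) (delta q t : R) (u : 'I_3 -> 'rV[R]_4 -> R) :
  0 < delta -> 1 <= q -> 0 < t ->
  (forall i, smooth (u i)) ->
  (forall i, periodic_x (u i)) ->
  0 <= Jval delta q t u.
Proof.
move=> d0 q1 t0 su pu.
rewrite /Jval; apply: Rintegral_ge0 => s _.
change (0 <= I1 (Jintegrand delta q u) s).
have cP' i j : continuous (Pij delta q u i j) := fun x => @cP R delta q u d0 su i j x.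
have cDG' i j : continuous ('D_(e4 R (sp j)) (G delta q u i j)) :=
  fun x => @cDG R delta q u d0 su i j x.
have cPD i j : continuous (fun x => Pij delta q u i j x - 'D_(e4 R (sp j)) (G delta q u i j) x).
  by apply: (@Ck_cont R 0); apply: Ck_sub; [exact: cP'|exact: cDG'].
have -> : Jintegrand delta q u = (fun x => \sum_(i < 3) (fun i x =>
    \sum_(j < 3) (Pij delta q u i j x - 'D_(e4 R (sp j)) (G delta q u i j) x)) i x).
  by apply/funext => x; rewrite (Jid q d0 su x).
rewrite I1_sum; last by move=> i; apply: cont_sum => j; exact: cPD.
have E : I1 (fun x => \sum_(i < 3) (fun i x => \sum_(j < 3) Pij delta q u i j x) i x) s =
    \sum_(i < 3) \sum_(j < 3) I1 (Pij delta q u i j) s.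
  rewrite I1_sum; last by move=> i; apply: cont_sum => j; exact: cP'.
  by apply: eq_bigr => i _; rewrite I1_sum //; move=> j; exact: cP'.
have -> : \sum_(i < 3) I1 (fun x => \sum_(j < 3)
      (Pij delta q u i j x - 'D_(e4 R (sp j)) (G delta q u i j) x)) s =
    \sum_(i < 3) \sum_(j < 3) I1 (Pij delta q u i j) s.
  apply: eq_bigr => i _; rewrite I1_sum; last by move=> j; exact: cPD.
  apply: eq_bigr => j _.
  rewrite I1_sub; [|exact: cP'|exact: cDG'].
  by rewrite (I1_div s (CG q d0 su 1 i j) (pG q d0 pu i j)) subr0.
rewrite -E /I1; apply: Rintegral_ge0 => x1 _; apply: Rintegral_ge0 => x2 _.
apply: Rintegral_ge0 => x3 _; exact: (Ppos d0 q1 su).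
Qed.
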